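(* Let $\mathsf{F},\mathsf{B},\mathsf{F}',\mathsf{B}',\mathsf{G}:\mathbf{Set}\to\mathbf{Set}$ be functors, $(X,f)$ an $(\mathsf{F},\mathsf{B})$-dialgebra, and $\mathcal{R}_{(X,f)}$ a category as in the context. Let $\lambda:\mathsf{F}'X\to\mathsf{G}\mathsf{F}X$ be an invariant from $\overline{\mathsf{F}'}$ to $\mathsf{G}\circ\overline{\mathsf{F}}$ and $\mu:\mathsf{G}\mathsf{B}X\to\mathsf{B}'X$ an invariant from $\mathsf{G}\circ\overline{\mathsf{B}}$ to $\overline{\mathsf{B}'}$ (all with respect to $(X,f)$ and $\mathcal{R}_{(X,f)}$). Define the $(\mathsf{F}',\mathsf{B}')$-dialgebra $(X,f^{\lambda,\mu})$ by $f^{\lambda,\mu}=\mu\circ\mathsf{G}f\circ\lambda$. Then any two elements of $X$ that are dialgebraically bisimilar in $(X,f)$ are dialgebraically bisimilar in $(X,f^{\lambda,\mu})$.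
   Context: For functors $\mathsf{F},\mathsf{B}:\mathbf{Set}\to\mathbf{Set}$, an $(\mathsf{F},\mathsf{B})$-dialgebra is a pair $(X,f)$ with $X$ a set and $f:\mathsf{F}X\to\mathsf{B}X$ a function; a homomorphism $h:(X,f)\to(Y,g)$ is a function $h:X\to Y$ with $g\circ\mathsf{F}h=\mathsf{B}h\circ f$; these form $\mathit{Dialg}(\mathsf{F},\mathsf{B})$. Dialgebraic bisimilarity on $(X,f)$: $x\sim_f y$ iff some homomorphism out of $(X,f)$ identifies $x$ and $y$. Let $\mathcal{E}$ be the subcategory of epimorphisms of $\mathit{Dialg}(\mathsf{F},\mathsf{B})$ and $(X,f)/\mathcal{E}$ the coslice: objects are epimorphisms $h:(X,f)\to(Y,g)$, arrows from $h$ to $h'$ are epimorphisms $k$ with $k\circ h=h'$. $\mathcal{R}_{(X,f)}$ is any full subcategory of $(X,f)/\mathcal{E}$ such that (1) for every object $h$ of $(X,f)/\mathcal{E}$ there exist an object $h'$ of $\mathcal{R}_{(X,f)}$ and an arrow $h\to h'$, and (2) $\mathit{id}_{(X,f)}$ is an object. For an object $h$, $\hat h:\mathit{id}_{(X,f)}\to h$ is the arrow given by $h$. For a functor $\mathsf{H}:\mathbf{Set}\to\mathbf{Set}$, its lifting $\overline{\mathsf{H}}:\mathcal{R}_{(X,f)}\to\mathbf{Set}$ is $\overline{\mathsf{H}}(h:(X,f)\to(Y,g))=\mathsf{H}(Y)$ on objects and $\overline{\mathsf{H}}(k)=\mathsf{H}(k)$ (applied to the underlying function) on arrows; thus $\overline{\mathsf{H}}(\mathit{id}_{(X,f)})=\mathsf{H}X$.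 Given functors $\Phi,\Psi:\mathcal{R}_{(X,f)}\to\mathbf{Set}$, a function $k:\Phi(\mathit{id}_{(X,f)})\to\Psi(\mathit{id}_{(X,f)})$ is an invariant from $\Phi$ to $\Psi$ iff for all $x_1,x_2\in\Phi(\mathit{id}_{(X,f)})$ and every object $h$ of $\mathcal{R}_{(X,f)}$, $\Phi\hat h(x_1)=\Phi\hat h(x_2)$ implies $\Psi\hat h(k(x_1))=\Psi\hat h(k(x_2))$. *)

(* Defs.v *)
Set Implicit Arguments.


(** Endofunctors of Set, modelled as endofunctors of Type (laws stated pointwise). *)
Record Functor := {
  fobj :> Type -> Type;
  fmap : forall A B : Type, (A -> B) -> fobj A -> fobj B;
  fmap_id : forall (A : Type) (u : fobj A), fmap (fun a : A => a) u = u;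
  fmap_comp : forall (A B C : Type) (g : B -> C) (h : A -> B) (u : fobj A),
      fmap (fun a => g (h a)) u = fmap g (fmap h u)
}.
Arguments fmap f {A B} _ _.

Section Dialg.
Variables F B : Functor.

Definition is_hom (X Y : Type) (f : F X -> B X) (g : F Y -> B Y) (h : X -> Y) : Prop :=
  forall u : F X, g (fmap F h u) = fmap B h (f u).

Definition is_epi (X Y : Type) (f : F X -> B X) (g : F Y -> B Y) (h : X -> Y) : Prop :=
  is_hom f g h /\
  forall (Z : Type) (k : F Z -> B Z) (k1 k2 : Y -> Z),
    is_hom g k k1 -> is_hom g k k2 ->
    (forall x : X, k1 (h x) = k2 (h x)) -> forall y : Y, k1 y = k2 y.

Definition bisimilar (X : Type) (f : F X -> B X) (x y : X) : Prop :=
  exists (Y : Type) (g : F Y -> B Y) (h : X -> Y), is_hom f g h /\ h x = h y.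

(** A full subcategory R of the coslice (X,f)/E, given by its class of objects
    (an object is an epimorphism h : (X,f) -> (Y,g)), satisfying (1) and (2). *)
Definition is_Rcat (X : Type) (f : F X -> B X)
    (R : forall Y : Type, (F Y -> B Y) -> (X -> Y) -> Prop) : Prop :=
  (forall (Y : Type) (g : F Y -> B Y) (h : X -> Y), R Y g h -> is_epi f g h) /\
  (forall (Y : Type) (g : F Y -> B Y) (h : X -> Y), is_epi f g h ->
     exists (Y' : Type) (g' : F Y' -> B Y') (h' : X -> Y') (k : Y -> Y'),
       R Y' g' h' /\ is_epi g g' k /\ forall x : X, k (h x) = h' x) /\
  R X f (fun x : X => x).

(** Every functor used here has the form
    (h : (X,f) -> (Y,g)) |-> PhiObj Y on objects; only its object X (for id) and
    its action PhiHat h on the arrows  \hat h : id -> h  enter the definition. *)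
Definition invariant (X : Type)
    (R : forall Y : Type, (F Y -> B Y) -> (X -> Y) -> Prop)
    (PhiObj PsiObj : Type -> Type)
    (PhiHat : forall Y : Type, (X -> Y) -> PhiObj X -> PhiObj Y)
    (PsiHat : forall Y : Type, (X -> Y) -> PsiObj X -> PsiObj Y)
    (k : PhiObj X -> PsiObj X) : Prop :=
  forall (x1 x2 : PhiObj X) (Y : Type) (g : F Y -> B Y) (h : X -> Y),
    R Y g h -> PhiHat Y h x1 = PhiHat Y h x2 -> PsiHat Y h (k x1) = PsiHat Y h (k x2).

End Dialg.

(** Lifting  \overline H : R -> Set  on the arrows \hat h (i.e. H h). *)
Definition lift_hat (H : Functor) (X Y : Type) (h : X -> Y) : H X -> H Y := fmap H h.

(** G o \overline H on the arrows \hat h (i.e. G (H h)). *)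
Definition comp_lift_hat (G H : Functor) (X Y : Type) (h : X -> Y) : G (H X) -> G (H Y) :=
  fmap G (fmap H h).
Arguments is_hom : clear implicits.
Arguments is_epi : clear implicits.
Arguments bisimilar : clear implicits.
Arguments is_Rcat : clear implicits.
Arguments invariant : clear implicits.

(* Main.v *)
Require Import Defs.
From Stdlib Require Import ClassicalEpsilon FunctionalExtensionality PropExtensionality ProofIrrelevance.

Lemma quot (X Y : Type) (h : X -> Y) (x0 : X) :
  exists (Q : Type) (q : X -> Q) (s : Q -> X) (r : Y -> Q),
    (forall p, q (s p) = p) /\ (forall z, h (s (q z)) = h z) /\ (forall z, r (h z) = q z).
Proof.
  pose (Q := {P : X -> Prop | exists x, P = fun z => h x = h z}).
  pose (q := fun x : X => exist (fun P : X -> Prop => exists x', P = fun z => h x' = h z)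
                          (fun z => h x = h z) (ex_intro _ x eq_refl) : Q).
  assert (qe : forall a b, h a = h b -> q a = q b).
  { intros a b e. unfold q. apply eq_sig_hprop. intros; apply proof_irrelevance.
    simpl. rewrite e. reflexivity. }
  pose (s := fun p : Q => proj1_sig (constructive_indefinite_description _ (proj2_sig p))).
  pose (r := fun y : Y => match excluded_middle_informative (exists z, h z = y) with
                          | left H => q (proj1_sig (constructive_indefinite_description _ H))
                          | right _ => q x0 end).
  exists Q, q, s, r.
  assert (Hs : forall p, proj1_sig p = fun z => h (s p) = h z).
  { intros p. unfold s. destruct (constructive_indefinite_description _ (proj2_sig p)) as [x e].
    exact e. }
  split; [|split].
  - intros p. apply eq_sig_hprop. intros; apply proof_irrelevance.
    rewrite (Hs p). reflexivity.
  - intros z. pose proof (Hs (q z)) as e. simpl in e.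
    pose proof (f_equal (fun P => P z) e) as e2. simpl in e2.
    assert (H : h (s (q z)) = h z). { rewrite <- e2. reflexivity. } exact H.
  - intros z. unfold r. destruct (excluded_middle_informative _) as [H|H].
    + destruct (constructive_indefinite_description _ H) as [w e]. simpl. apply qe. exact e.
    + exfalso. apply H. exists z. reflexivity.
Qed.

Lemma fc2 (F : Functor) (A B C : Type) (g : B -> C) (h : A -> B) (u : F A) :
  fmap F g (fmap F h u) = fmap F (fun a => g (h a)) u.
Proof. symmetry. apply fmap_comp. Qed.

Lemma fext (F : Functor) (A B : Type) (g g' : A -> B) (u : F A) :
  (forall a, g a = g' a) -> fmap F g u = fmap F g' u.
Proof. intros H. replace g' with g. reflexivity. apply functional_extensionality; exact H. Qed.

Lemma epi_of_hom (F B : Functor) (X Y : Type) (f : F X -> B X) (g : F Y -> B Y) (h : X -> Y)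
  (x0 : X) : is_hom F B X Y f g h ->
  exists (Q : Type) (gq : F Q -> B Q) (q : X -> Q),
    is_epi F B X Q f gq q /\ forall a b, h a = h b -> q a = q b.
Proof.
  intros Hh. destruct (quot _ _ h x0) as (Q & q & s & r & Q1 & Q2 & Q3).
  exists Q, (fun v => fmap B q (f (fmap F s v))), q.
  assert (Hq : forall t, fmap B q t = fmap B r (fmap B h t)).
  { intros t. rewrite fc2. apply fext. intros a; symmetry; apply Q3. }
  split; [split|].
  - intros u. rewrite (Hq (f u)), (Hq (f _)). f_equal.
    rewrite <- (Hh u), <- Hh. f_equal.
    rewrite (fc2 F _ _ _ s q), fc2. apply fext. intros a. apply Q2.
  - intros Z k k1 k2 _ _ E p. rewrite <- (Q1 p). apply E.
  - intros a b e. rewrite <- (Q3 a), <- (Q3 b), e. reflexivity.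
Qed.

Theorem theorem4 (F B F' B' G : Functor) (X : Type) (f : F X -> B X)
  (R : forall Y : Type, (F Y -> B Y) -> (X -> Y) -> Prop)
  (HR : is_Rcat F B X f R)
  (lam : F' X -> G (F X)) (mu : G (B X) -> B' X)
  (Hlam : invariant F B X R (fobj F') (fun A => G (F A))
            (fun Y h => lift_hat F' h) (fun Y h => comp_lift_hat G F h) lam)
  (Hmu : invariant F B X R (fun A => G (B A)) (fobj B')
            (fun Y h => comp_lift_hat G B h) (fun Y h => lift_hat B' h) mu)
  (x y : X) :
  bisimilar F B X f x y ->
  bisimilar F' B' X (fun u : F' X => mu (fmap G f (lam u))) x y.
Proof.
  intros (Y & g & h & Hh & hxy).
  destruct (epi_of_hom F B X Y f g h x Hh) as (Q & gq & q & Eq & Hq).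
  destruct HR as (HR1 & HR2 & _).
  destruct (HR2 _ _ _ Eq) as (Y' & g' & h' & k & Rh' & _ & Hk).
  assert (hom' : is_hom F B X Y' f g' h') by (apply (HR1 _ _ _ Rh')).
  assert (hx : h' x = h' y). { rewrite <- (Hk x), <- (Hk y), (Hq _ _ hxy). reflexivity. }
  destruct (quot _ _ h' x) as (Q' & q' & s' & r' & Q1 & Q2 & Q3).
  exists Q', (fun v => fmap B' q' (mu (fmap G f (lam (fmap F' s' v))))), q'.
  split.
  2:{ rewrite <- (Q3 x), <- (Q3 y), hx. reflexivity. }
  intros u.
  assert (Hq' : forall t, fmap B' q' t = fmap B' r' (fmap B' h' t)).
  { intros t. rewrite fc2. apply fext. intros a; symmetry; apply Q3. }
  rewrite (Hq' (mu _)), (Hq' (mu (fmap G f (lam u)))). f_equal.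
  apply (Hmu _ _ Y' g' h' Rh').
  unfold comp_lift_hat.
  rewrite (fc2 G _ _ _ (fmap B h') f), (fc2 G _ _ _ (fmap B h') f).
  rewrite (fext G _ _ (fun a => fmap B h' (f a)) (fun a => g' (fmap F h' a))) by (intros a; symmetry; apply hom').
  rewrite (fext G _ _ (fun a => fmap B h' (f a)) (fun a => g' (fmap F h' a))) by (intros a; symmetry; apply hom').
  rewrite <- (fc2 G _ _ _ g' (fmap F h')), <- (fc2 G _ _ _ g' (fmap F h')).
  f_equal.
  apply (Hlam _ _ Y' g' h' Rh').
  unfold lift_hat. rewrite (fc2 F' _ _ _ h' s'), fc2. apply fext. intros a. apply Q2.
Qed.
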